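(* Let $n$ be odd, $k$ a positive integer with $\gcd(k,n)=1$, and $q=2^k$. For every $c\in\mathbb{F}_{2^n}$, the system $$\operatorname{Tr}\!\left(\frac{1}{v^{1/(q-1)}}\right)=1,\qquad (v+1)^{q+1}+cv=0$$ has at most one solution $v\in\mathbb{F}_{2^n}$.
   Context: $\operatorname{Tr}(x)=x+x^2+\cdots+x^{2^{n-1}}$ is the absolute trace from $\mathbb{F}_{2^n}$ to $\mathbb{F}_2$. Since $\gcd(q-1,2^n-1)=1$, the map $w\mapsto w^{q-1}$ is a bijection of $\mathbb{F}_{2^n}$, and $v^{1/(q-1)}$ denotes the unique $w\in\mathbb{F}_{2^n}$ with $w^{q-1}=v$. (A solution necessarily has $v\neq 0$, since $v=0$ does not satisfy the second equation.) *)

(* Defs.v *)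
From HB Require Import structures.
From mathcomp Require Import all_boot all_order all_algebra all_field.
Set Implicit Arguments. Unset Strict Implicit. Unset Printing Implicit Defensive.
Import GRing.Theory.
Local Open Scope ring_scope.

Definition absTr (F : finFieldType) (n : nat) (x : F) : F :=
  \sum_(i < n) x ^+ (2 ^ i)%N.

(* v^{1/(q-1)}: the (unique, when w |-> w^(q-1) is bijective) w with w^(q-1) = v;
   defaults to 0 if no such w exists (never happens under the paper's hypotheses). *)
Definition qroot (F : finFieldType) (q : nat) (v : F) : F :=
  odflt 0 [pick w : F | w ^+ (q - 1) == v].

(* Main.v *)
Require Import Defs.
From HB Require Import structures.
From mathcomp Require Import all_boot all_order all_algebra all_field.
From mathcomp Require Import ring.
Import GRing.Theory.
Local Open Scope ring_scope.


Section Aux.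
Variable F : finFieldType.
Variable n : nat.
Hypothesis hF : #|F| = (2 ^ n)%N.
Hypothesis hn : (0 < n)%N.

Lemma char2F : (2%N \in [pchar F]).
Proof. exact: (card_finPcharP hF). Qed.

Lemma frobq (k : nat) (x y : F) : (x + y) ^+ (2 ^ k) = x ^+ (2 ^ k) + y ^+ (2 ^ k).
Proof.
apply: exprDn_pchar; rewrite pnatX; apply/orP; left.
by rewrite pnatE //; exact: char2F.
Qed.

Lemma absTrD (x y : F) : absTr n (x + y) = absTr n x + absTr n y.
Proof.
rewrite /absTr -big_split /=; apply: eq_bigr => i _; exact: frobq.
Qed.

Lemma absTr_sq (x : F) : absTr n (x ^+ 2) = absTr n x.
Proof.
rewrite /absTr; case: n hF hn => [|m] hF' _ //.
rewrite [LHS]big_ord_recr [RHS]big_ord_recl /= expn0 expr1.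
have -> : (x ^+ 2) ^+ (2 ^ m) = x.
  by rewrite -exprM -expnS -hF' expf_card.
rewrite addrC; congr (_ + _); apply: eq_bigr => i _.
by rewrite -exprM /bump /= add1n expnS.
Qed.

Lemma absTr_pow (k : nat) (x : F) : absTr n (x ^+ (2 ^ k)) = absTr n x.
Proof.
elim: k => [|k IH]; first by rewrite expn0 expr1.
by rewrite expnSr exprM absTr_sq IH.
Qed.

Lemma absTr0 : absTr n (0 : F) = 0.
Proof. by rewrite /absTr big1 // => i _; rewrite expr0n expn_eq0. Qed.

End Aux.
Arguments char2F {F n}.
Arguments frobq {F n}.
Arguments absTrD {F n}.
Arguments absTr_sq {F n}.
Arguments absTr_pow {F n}.
Arguments absTr0 {F n}.

Theorem mainTheorem2 (F : finFieldType) (n k q : nat)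
  (hF : #|F| = (2 ^ n)%N) (hn : odd n) (hk : (0 < k)%N) (hkn : coprime k n)
  (hq : q = (2 ^ k)%N) (c : F) :
  forall v1 v2 : F,
    absTr n ((qroot q v1)^-1) = 1 -> (v1 + 1) ^+ q.+1 + c * v1 = 0 ->
    absTr n ((qroot q v2)^-1) = 1 -> (v2 + 1) ^+ q.+1 + c * v2 = 0 ->
    v1 = v2.
Proof.
move=> x y ht1 E1 _ E2.
have hn0 : (0 < n)%N by rewrite lt0n; apply: contraTneq hn => ->.
have h2 : (2%:R : F) = 0 := pcharf0 (char2F hF).
have hq0 : (0 < q)%N by rewrite hq expn_gt0.
have hqS : q = (q - 1).+1 by rewrite subn1 prednK.
case: (eqVneq x y) => // hxy.
have hd : x + y != 0.
  apply: contraNneq hxy => h.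
  have hyy : y == - y by rewrite -addr_eq0 -mulr2n -mulr_natr h2 mulr0.
  by move/eqP: h; rewrite addr_eq0 => /eqP ->; rewrite eq_sym.
set d := x + y.
move: ht1; rewrite /qroot; case: pickP => [w /eqP hw|_] /= ht1; last first.
  by move: ht1; rewrite invr0 absTr0 => /eqP; rewrite eq_sym oner_eq0.
have hw0 : w != 0.
  by apply: contra_eq_neq ht1 => ->; rewrite invr0 absTr0 eq_sym oner_eq0.
have hx0 : x != 0 by rewrite -hw expf_neq0.
set D := d ^+ (q - 1).
have hD0 : D != 0 by rewrite expf_neq0.
have hdq : d ^+ q = d * D by rewrite {1}hqS exprS.
have hW : w ^+ q = w * x by rewrite {1}hqS exprS hw.
set a := (x + 1) ^+ q.
have hb : (y + 1) ^+ q = a + d ^+ q.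
  rewrite /a hq -(frobq hF); congr (_ ^+ _).
  have -> : y + 1 = x + 1 + d + 2%:R * (- x) by rewrite /d; ring.
  by rewrite h2 mul0r addr0.
rewrite exprSr -/a in E1.
rewrite exprSr hb hdq in E2.
set X := c + a + D * (x + 1) + d * D.
have hX : X = 0.
  have : d * X = 0.
    have -> : d * X = (a * (x + 1) + c * x) + ((a + d * D) * (y + 1) + c * y)
                       + 2%:R * (d * D * x - a) by rewrite /X /d; ring.
    by rewrite E1 E2 h2 !mul0r !addr0.
  by move/eqP; rewrite mulf_eq0 (negbTE hd) /= => /eqP.
have hT2 : a + D * x * (y + 1) = 0.
  have -> : a + D * x * (y + 1) = (a * (x + 1) + c * x) - x * X
        + 2%:R * (x * D * (y + 1) + x ^+ 2 * D) by rewrite /X /d; ring.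
  by rewrite E1 hX h2 !mulr0 mul0r !subr0 addr0.
have ha : a = - (D * x * (y + 1)) by apply/eqP; rewrite -addr_eq0 hT2.
set t := (x + 1) / (d * w).
have hwt : w^-1 = t ^+ q + t.
  have -> : t ^+ q = a / (d ^+ q * w ^+ q) by rewrite /t expr_div_n exprMn.
  rewrite hdq hW ha /t.
  have -> : w^-1 = w^-1 - 2%:R * (y / (d * w)) by rewrite h2 mul0r subr0.
  rewrite /d; field.
  by rewrite hw0 hx0 hD0 hd.
move: ht1; rewrite hwt (absTrD hF) hq (absTr_pow hF hn0) -mulr2n -mulr_natr h2 mulr0.
by move/eqP; rewrite eq_sym oner_eq0.
Qed.
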